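(* Let $\Delta=(\Gamma,\mathbf{R})$ be a theory with $A\Rightarrow B\in\mathbf{R}^{\Rightarrow}$ such that $A\wedge\neg B$ is PL-consistent. Then, with entailment evaluated over replete $\mathbf{R}$-ordered models, $\Delta\mid\sim A\Rightarrow B$.
   Context: Boolean formulas over propositional letters; $\models_{\mathrm{PL}}$ classical entailment; $A$ is PL-consistent if $A\not\models_{\mathrm{PL}}\bot$. A theory is $\Delta=(\Gamma,\mathbf{R})$, $\Gamma$ a finite set of Boolean or alethic ($\Box$-) formulas, $\mathbf{R}=(\mathbf{R}^{\Rightarrow},\mathbf{R}^{\mathrm{o}})$ with $\mathbf{R}^{\Rightarrow}$ a finite set of normality conditionals $A\Rightarrow B$ (''if $A$ then normally $B$''; body $b=A$, head $h=B$) and $\mathbf{R}^{\mathrm{o}}$ a finite set of obligations. For $X\subseteq\mathbf{R}^{\Rightarrow}$, $\mathrm{m}(X)=\{A\rightarrow B:A\Rightarrow B\in X\}$. Standing assumption (coherence): there is no nonempty $X\subseteq\mathbf{R}^{\Rightarrow}$ with $\mathrm{m}(X)\models_{\mathrm{PL}}\bigwedge_{r\in X}\neg b(r)$. LM-sequence: $\varepsilon(X)=\{A\Rightarrow B\in\mathbf{R}^{\Rightarrow}:\mathrm{m}(X)\models_{\mathrm{PL}}\neg A\}$, $\mathcal{E}_0=\mathbf{R}^{\Rightarrow}$, $\mathcal{E}_{i+1}=\varepsilon(\mathcal{E}_i)$; order $m$ = least $k$ with $\mathcal{E}_l=\mathcal{E}_k$ for all $l\ge k$, $\mathcal{E}_\infty=\mathcal{E}_m$.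 $\Delta_i=\mathcal{E}_i\setminus\mathcal{E}_{i+1}$ ($0\le i\le m-1$), $\Delta_m=\mathcal{E}_\infty$. $\tau(X)=\langle|\Delta_{m-1}\cap X|,\ldots,|\Delta_0\cap X|\rangle$; $X\gtrsim Y$ iff $\tau(X)=\tau(Y)$ or at the first differing coordinate $\tau(X)$ has the smaller entry. An $\mathbf{R}$-ordered model is $(W,\succeq_N,\succeq_I,v)$, $W\neq\emptyset$, valuation $v$, $w_1\succeq_N w_2$ iff $F(w_1)\gtrsim F(w_2)$ with $F(w)=\{r\in\mathbf{R}^{\Rightarrow}:w\models b(r)\wedge\neg h(r)\}$, and $\succeq_I$ the ideality ordering determined by $\mathbf{R}^{\mathrm{o}}$. $\max_{\succeq_N}(X)=\{w\in X:\forall u\in X(u\succeq_N w\Rightarrow w\succeq_N u)\}$. Truth: $w\models\Box A$ iff $A$ holds at all worlds; $w\models A\Rightarrow B$ iff $\max_{\succeq_N}(\Vert A\Vert)\subseteq\Vert B\Vert$. Replete: every PL-consistent Boolean formula holds at some world. $\Delta\mid\sim\varphi$ iff in every (replete) $\mathbf{R}$-ordered model, every world satisfying all of $\Gamma$ satisfies $\varphi$. *)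

(* Defs.v *)
From Stdlib Require List.
From HB Require Import structures.
From mathcomp Require Import all_boot.
From mathcomp Require Import boolp.
Set Implicit Arguments. Unset Strict Implicit. Unset Printing Implicit Defensive.

Inductive bform :=
  | BVar of nat | BBot | BTop
  | BNeg of bform | BAnd of bform & bform | BOr of bform & bform
  | BImp of bform & bform.

Fixpoint evalb (v : nat -> bool) (a : bform) : bool :=
  match a with
  | BVar p => v p | BBot => false | BTop => true
  | BNeg a => ~~ evalb v a
  | BAnd a b => evalb v a && evalb v b
  | BOr a b => evalb v a || evalb v b
  | BImp a b => evalb v a ==> evalb v b
  end.

Definition PLentails (X : seq bform) (a : bform) : Prop :=
  forall v : nat -> bool, all (evalb v) X -> evalb v a.

Definition PLconsistent (a : bform) : Prop := ~ PLentails [:: a] BBot.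

Inductive form :=
  | FB of bform
  | FNeg of form | FAnd of form & form | FOr of form & form | FImp of form & form
  | FBox of form
  | FCond of bform & bform.

Fixpoint cond_free (f : form) : bool :=
  match f with
  | FB _ => true
  | FNeg f => cond_free f
  | FAnd f g | FOr f g | FImp f g => cond_free f && cond_free g
  | FBox f => cond_free f
  | FCond _ _ => false
  end.

Section Rules.
Variable rules : seq (bform * bform).
Local Notation n := (size rules).
Definition body (i : 'I_n) : bform := (nth (BTop, BTop) rules i).1.
Definition head (i : 'I_n) : bform := (nth (BTop, BTop) rules i).2.

(* v satisfies m(X) = { A -> B : A => B in X } *)
Definition sat_m (v : nat -> bool) (X : {set 'I_n}) : Prop :=
  forall i, i \in X -> evalb v (BImp (body i) (head i)).

Definition m_entails (X : {set 'I_n}) (t : bform) : Prop :=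
  forall v, sat_m v X -> evalb v t.

Definition coherent : Prop :=
  forall X : {set 'I_n}, X != set0 ->
    ~ (forall v, sat_m v X -> forall i, i \in X -> ~~ evalb v (body i)).

Definition eps (X : {set 'I_n}) : {set 'I_n} :=
  [set i | `[< m_entails X (BNeg (body i)) >] ].

Definition LM (k : nat) : {set 'I_n} := iter k eps setT.

Lemma eps_mono (X Y : {set 'I_n}) : X \subset Y -> eps X \subset eps Y.
Proof.
move=> /subsetP XY; apply/subsetP => i; rewrite !inE => /asboolP H.
apply/asboolP => v Hv; apply: H => j jX; exact: Hv (XY _ jX).
Qed.

Lemma LM_decr k : LM k.+1 \subset LM k.
Proof.
elim: k => [|k IH]; first exact: subsetT.
exact: eps_mono.
Qed.

Lemma LM_stab : exists k, `[< forall l, k <= l -> LM l = LM k >].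
Proof.
have key k : (exists j, j <= k /\ LM j.+1 = LM j) \/ #|LM k| + k <= n.
  elim: k => [|k [[j [jk E]]|IH]].
  - by right; rewrite addn0 /LM /= cardsT card_ord.
  - by left; exists j; split => //; apply: leq_trans jk _.
  - have [E|NE] := eqVneq (LM k.+1) (LM k); first by left; exists k.
    right; have lt : #|LM k.+1| < #|LM k|.
      by apply: proper_card; rewrite properEneq NE LM_decr.
    by rewrite addnS; apply: leq_trans IH; rewrite ltn_add2r.
have [[j [_ Ej]]|] := key n.+1; last by rewrite addnS ltnNge leq_addl.
exists j; apply/asboolP => l /subnK <-; elim: (l - j) => [|d IH] //=.
by rewrite IH; exact: Ej.
Qed.

Definition LMorder : nat := ex_minn LM_stab.

Definition LMDelta (i : nat) : {set 'I_n} := LM i :\: LM i.+1.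

Definition tcoord (i : nat) (X : {set 'I_n}) : nat := #|LMDelta i :&: X|.

(* X >~ Y : tau(X) = tau(Y), or at the first differing coordinate of
   <|Delta_{m-1} cap X|, ..., |Delta_0 cap X|>  tau(X) is smaller *)
Definition setge (X Y : {set 'I_n}) : Prop :=
  (forall i, i < LMorder -> tcoord i X = tcoord i Y) \/
  (exists j, j < LMorder /\ tcoord j X < tcoord j Y /\
     forall i, j < i < LMorder -> tcoord i X = tcoord i Y).

Record model := Model {
  world : Type;
  world_inh : world;
  val : world -> nat -> bool
}.

Variable M : model.

Definition Fviol (w : world M) : {set 'I_n} :=
  [set i | evalb (val w) (body i) && ~~ evalb (val w) (head i)].

Definition geN (w1 w2 : world M) : Prop := setge (Fviol w1) (Fviol w2).

Definition maxN (a : bform) (w : world M) : Prop :=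
  evalb (val w) a /\
  forall u, evalb (val u) a -> geN u w -> geN w u.

Fixpoint sat (w : world M) (f : form) : Prop :=
  match f with
  | FB a => evalb (val w) a
  | FNeg f => ~ sat w f
  | FAnd f g => sat w f /\ sat w g
  | FOr f g => sat w f \/ sat w g
  | FImp f g => sat w f -> sat w g
  | FBox f => forall u, sat u f
  | FCond a b => forall u, maxN a u -> evalb (val u) b
  end.

Definition replete : Prop :=
  forall a : bform, PLconsistent a -> exists w : world M, evalb (val w) a.

End Rules.

Definition entails (Gamma : seq form) (rules : seq (bform * bform)) (phi : form) : Prop :=
  forall M : model, replete M ->
    forall w : world M, (forall g, List.In g Gamma -> sat rules w g) -> sat rules w phi.

(* Main.v *)
Require Import Defs.
From Stdlib Require List.
From mathcomp Require Import all_boot.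
From mathcomp Require Import boolp.
Set Implicit Arguments. Unset Strict Implicit. Unset Printing Implicit Defensive.

Lemma in_nth_ex (T : Type) (d x : T) (s : seq T) :
  List.In x s -> exists i, i < size s /\ nth d s i = x.
Proof.
elim: s => [|y s IH] //= [->|H]; first by exists 0.
by have [i [Hi E]] := IH H; exists i.+1.
Qed.

Definition bigand (s : seq bform) := foldr BAnd BTop s.
Lemma eval_bigand v s : evalb v (bigand s) = all (evalb v) s.
Proof. by elim: s => //= a s ->. Qed.

Section P.
Variable rules : seq (bform * bform).
Local Notation n := (size rules).

Lemma LM_sub j k : k <= j -> LM rules j \subset LM rules k.
Proof.
move=> /subnK <-; elim: (j - k) => [|d IH] //=.
move=> * ; apply: subset_trans IH; exact: LM_decr.
Qed.

Lemma LMorder_stab : LM rules (LMorder rules).+1 = LM rules (LMorder rules).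
Proof.
rewrite /LMorder; case: ex_minnP => m /asboolP H _.
by apply: H.
Qed.

Lemma strict_ge (X Y : {set 'I_n}) k : k < LMorder rules ->
  (forall j, k <= j < LMorder rules -> tcoord j X <= tcoord j Y) ->
  tcoord k X < tcoord k Y ->
  setge X Y /\ ~ setge Y X.
Proof.
move=> km Hle Hlt; split.
  right.
  have exP : exists j, [&& j < LMorder rules, k <= j & tcoord j X != tcoord j Y].
    by exists k; rewrite km leqnn neq_ltn Hlt.
  have bnd : forall j, [&& j < LMorder rules, k <= j & tcoord j X != tcoord j Y] -> j <= LMorder rules.
    by move=> j /and3P [/ltnW -> _ _].
  case: (ex_maxnP exP bnd) => j /and3P [jm kj nj] mx.
  exists j; split => //; split.
    by rewrite ltn_neqAle nj Hle // kj jm.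
  move=> i /andP [ji im]; apply/eqP; apply: contraT => ne.
  have := mx i; rewrite im ne (leq_trans kj (ltnW ji)) => /(_ isT).
  by rewrite leqNgt ji.
case=> [H|[j [jm [lt eq]]]].
  by move: Hlt; rewrite (H k km) ltnn.
case: (leqP k j) => kj.
  by move: (Hle j); rewrite kj jm => /(_ isT); rewrite leqNgt lt.
by move: Hlt; rewrite eq ?ltnn // kj km.
Qed.

End P.

Theorem proposition5 (Gamma : seq form) (rules : seq (bform * bform)) (A B : bform) :
  (forall g, List.In g Gamma -> cond_free g) ->
  coherent rules ->
  List.In (A, B) rules ->
  PLconsistent (BAnd A (BNeg B)) ->
  entails Gamma rules (FCond A B).
Proof.
move=> _ coh inAB _ M rep w _ /= u [uA umax].
have [i0 [i0lt Ei]] := in_nth_ex (BTop, BTop) inAB.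
pose r : 'I_(size rules) := Ordinal i0lt.
have bodyr : body r = A by rewrite /body Ei.
have headr : Defs.head r = B by rewrite /Defs.head Ei.
set m := LMorder rules.
have rnm : r \notin LM rules m.
  apply/negP => rin.
  apply: (coh (LM rules m)); first by apply/set0Pn; exists r.
  move=> v Hv i iin.
  move: iin; rewrite -{1}LMorder_stab /= /eps inE => /asboolP H.
  exact: H v Hv.
have exP : exists k, r \notin LM rules k by exists m.
case: (ex_minnP exP) => k1 rk1 mink.
have k1m : k1 <= m by apply: mink.
case: k1 rk1 mink k1m => [|k] rk1 mink k1m.
  by move: rk1; rewrite /LM /= inE.
have rk : r \in LM rules k.
  by apply: contraT => H; have := mink k H; rewrite ltnn.
have km : k < m by [].
move: rk1 => /= rk1.
have : r \notin eps (LM rules k) by [].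
rewrite inE => /asboolP; rewrite /m_entails => NE.
have [v0 [Hv0 Av0]] : exists v, sat_m v (LM rules k) /\ evalb v A.
  apply: contrapT => H; apply: NE => v Hv; rewrite bodyr /=.
  by apply/negP => Av; apply: H; exists v.
pose phi := BAnd A (bigand [seq BImp (body i) (Defs.head i) | i <- enum (LM rules k)]).
have [w' Hw'] : exists w' : world M, evalb (Defs.val w') phi.
  apply: rep => H; suff: evalb v0 BBot by []; apply: H; rewrite /= Av0 eval_bigand andbT /=; rewrite all_map; apply/allP => i /=; rewrite mem_enum => iin.
  exact: Hv0.
move: Hw'; rewrite /= eval_bigand => /andP [Aw' allw'].
have Fw' : forall i, i \in LM rules k -> i \notin Fviol rules w'.
  move=> i iin; rewrite inE; apply/negP => /andP [b nh].
  move: allw'; rewrite all_map => /allP /(_ i); rewrite mem_enum => /(_ iin) /=.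
  by rewrite b /= (negbTE nh).
case uB: (evalb (Defs.val u) B) => //.
have H1 : forall j, k <= j < m -> tcoord j (Fviol rules w') <= tcoord j (Fviol rules u).
  move=> j /andP [kj _]; rewrite /tcoord.
  suff -> : LMDelta rules j :&: Fviol rules w' = set0 by rewrite cards0.
  apply/setP => i; rewrite inE in_set0; apply/negP => /andP [/setDP [ij _] iF].
  have := Fw' i; rewrite (subsetP (LM_sub rules kj) _ ij) => /(_ isT).
  by rewrite iF.
have H2 : tcoord k (Fviol rules w') < tcoord k (Fviol rules u).
  rewrite /tcoord.
  suff -> : LMDelta rules k :&: Fviol rules w' = set0.
    rewrite cards0 card_gt0; apply/set0Pn; exists r.
    rewrite inE; apply/andP; split; first by apply/setDP.
    by rewrite inE bodyr headr uA uB.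
  apply/setP => i; rewrite inE in_set0; apply/negP => /andP [/setDP [ij _] iF].
  by have := Fw' i ij; rewrite iF.
have [ge1 nge] := @strict_ge rules (Fviol rules w') (Fviol rules u) k km H1 H2.
exfalso; apply: nge; exact: umax.
Qed.
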